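(* Let $\Theta\subseteq\mathbb R^p$ be a convex full-dimensional polytope with $\Theta\subseteq\Theta^*$, let $\epsilon_{\mathrm a}>0$ and $\epsilon_{\mathrm r}\ge0$, and let $\Delta=\{\delta\in\{0,1\}^m:\Theta^*_\delta\cap\Theta\neq\emptyset\}$. Let $\theta$ be an interior point of $\Theta$. Suppose $V^*$ is continuous at $\theta$ and there exists $\delta\in\Delta$ with $V^*_\delta(\theta)=V^*(\theta)$ such that $V^*_\delta$ is continuous at $\theta$. Then the overlap at $\theta$ is positive: there exists $\gamma>0$ such that for every $\theta'\in\mathbb R^p$ with $\|\theta'-\theta\|_2\le\gamma$, $$V^*_\delta(\theta')-V^*(\theta')\le\max\{\epsilon_{\mathrm a},\epsilon_{\mathrm r}V^*(\theta')\}.$$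
   Context: Let $p,n,m,d,l$ be positive integers and let $\mathcal K\subseteq\mathbb R^d$ be a convex cone that is a Cartesian product of convex cones. Let $f,g,h$ be functions on $\mathbb R^p\times\mathbb R^n\times\mathbb R^m$ with values in $\mathbb R$, $\mathbb R^l$, $\mathbb R^d$ respectively, such that for each fixed $\delta\in\{0,1\}^m$, $(\theta,x)\mapsto f(\theta,x,\delta)$ is jointly convex and $(\theta,x)\mapsto g(\theta,x,\delta)$, $h(\theta,x,\delta)$ are affine. For $\delta\in\{0,1\}^m$ and $\theta\in\mathbb R^p$, $V^*_\delta(\theta)\in\mathbb R\cup\{+\infty\}$ is the optimal value of: minimize $f(\theta,x,\delta)$ over $x\in\mathbb R^n$ subject to $g(\theta,x,\delta)=0$, $h(\theta,x,\delta)\in\mathcal K$ ($+\infty$ if infeasible); $\Theta^*_\delta$ is the set of $\theta$ where it is feasible. $V^*(\theta)=\min_{\delta\in\{0,1\}^m}V^*_\delta(\theta)$ is the optimal value of the mixed-integer problem (minimize jointly over $x$ and $\delta\in\{0,1\}^m$), and $\Theta^*=\bigcup_\delta\Theta^*_\delta$ is its feasible parameter set. A commutation $\delta$ is called $\epsilon$-suboptimal at $\theta$ if $V^*_\delta(\theta)-V^*(\theta)\le\max\{\epsilon_{\mathrm a},\epsilon_{\mathrm r}V^*(\theta)\}$. *)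

(* Defs.v *)
From HB Require Import structures.
From mathcomp Require Import all_boot all_order all_algebra.
From mathcomp Require Import all_classical all_reals all_analysis.
Set Implicit Arguments. Unset Strict Implicit. Unset Printing Implicit Defensive.
Import Order.TTheory GRing.Theory Num.Theory.
Import numFieldNormedType.Exports.
Local Open Scope classical_set_scope.
Local Open Scope ring_scope.

Section Defs.
Variable R : realType.

Definition binvec (m : nat) : set 'rV[R]_m :=
  [set δ | forall i, δ 0 i = 0 \/ δ 0 i = 1].

Definition norm2 (p : nat) (v : 'rV[R]_p) : R := Num.sqrt (\sum_(i < p) v 0 i ^+ 2).

Definition convex_cone (d : nat) (K : set 'rV[R]_d) : Prop :=
  (forall x y, K x -> K y -> K (x + y)) /\
  (forall (t : R) x, 0 <= t -> K x -> K (t *: x)).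

Variables (p n m : nat).

Definition jointly_convex (f : 'rV[R]_p -> 'rV[R]_n -> 'rV[R]_m -> R) : Prop :=
  forall δ, binvec δ ->
  forall θ1 θ2 x1 x2 (t : R), 0 <= t <= 1 ->
    f (t *: θ1 + (1 - t) *: θ2) (t *: x1 + (1 - t) *: x2) δ
      <= t * f θ1 x1 δ + (1 - t) * f θ2 x2 δ.

Definition jointly_affine (k : nat)
    (g : 'rV[R]_p -> 'rV[R]_n -> 'rV[R]_m -> 'rV[R]_k) : Prop :=
  forall δ, binvec δ ->
  exists (A : 'M[R]_(p, k)) (B : 'M[R]_(n, k)) (c : 'rV[R]_k),
    forall θ x, g θ x δ = θ *m A + x *m B + c.

Variables (l d : nat)
  (f : 'rV[R]_p -> 'rV[R]_n -> 'rV[R]_m -> R)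
  (g : 'rV[R]_p -> 'rV[R]_n -> 'rV[R]_m -> 'rV[R]_l)
  (h : 'rV[R]_p -> 'rV[R]_n -> 'rV[R]_m -> 'rV[R]_d)
  (K : set 'rV[R]_d).

Definition feasible (δ : 'rV[R]_m) (θ : 'rV[R]_p) (x : 'rV[R]_n) : Prop :=
  g θ x δ = 0 /\ K (h θ x δ).

(* optimal value of the convex subproblem for commutation δ (+oo if infeasible) *)
Definition Vdelta (δ : 'rV[R]_m) (θ : 'rV[R]_p) : \bar R :=
  ereal_inf [set (f θ x δ)%:E | x in [set x | feasible δ θ x]].

Definition Theta_delta (δ : 'rV[R]_m) : set 'rV[R]_p :=
  [set θ | exists x, feasible δ θ x].

Definition Vstar (θ : 'rV[R]_p) : \bar R :=
  ereal_inf [set Vdelta δ θ | δ in @binvec m].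

Definition Theta_star : set 'rV[R]_p :=
  \bigcup_(δ in @binvec m) Theta_delta δ.

Definition Delta (Θ : set 'rV[R]_p) : set 'rV[R]_m :=
  [set δ | binvec δ /\ (Theta_delta δ `&` Θ) !=set0].

End Defs.

Definition polytope (R : realType) (p : nat) (Θ : set 'rV[R]_p) : Prop :=
  exists (k : nat) (v : 'I_k -> 'rV[R]_p),
    Θ = [set θ | exists w : 'I_k -> R,
           (forall i, 0 <= w i) /\ \sum_(i < k) w i = 1 /\
           θ = \sum_(i < k) w i *: v i].

Definition full_dimensional (R : realType) (p : nat) (Θ : set 'rV[R]_p) : Prop :=
  (interior Θ) !=set0.

(* Main.v *)
Require Import Defs.
From HB Require Import structures.
From mathcomp Require Import all_boot all_order all_algebra.
From mathcomp Require Import all_classical all_reals all_analysis.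
Import Order.TTheory GRing.Theory Num.Theory.
Import numFieldNormedType.Exports.
Local Open Scope classical_set_scope.
Local Open Scope ring_scope.
From mathcomp Require Import lra.

Lemma comp_le_norm2 (R : realType) (p : nat) (v : 'rV[R]_p) (i : 'I_p) :
  `|v 0 i| <= norm2 v.
Proof.
rewrite /norm2 -sqrtr_sqr ler_sqrt; last by apply: sumr_ge0 => j _; exact: sqr_ge0.
rewrite (bigD1 i) //= lerDl; apply: sumr_ge0 => j _; exact: sqr_ge0.
Qed.

Lemma mxnorm_lt (R : realType) (p : nat) (v : 'rV[R]_p) (e : R) :
  0 < e -> norm2 v < e -> `|v| < e.
Proof.
move=> e0 hv; have -> : `|v| = mx_norm v by [].
rewrite mx_normrE; apply/bigmax_ltP; split=> // -[a b] _ /=.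
rewrite (ord1 a). apply: le_lt_trans _ hv; exact: comp_le_norm2.
Qed.
Theorem proposition2 (R : realType) (p n m d l : nat)
  (hp : (0 < p)%N) (hn : (0 < n)%N) (hm : (0 < m)%N) (hd : (0 < d)%N) (hl : (0 < l)%N)
  (K : set 'rV[R]_d) (hK : convex_cone K)
  (f : 'rV[R]_p -> 'rV[R]_n -> 'rV[R]_m -> R)
  (g : 'rV[R]_p -> 'rV[R]_n -> 'rV[R]_m -> 'rV[R]_l)
  (h : 'rV[R]_p -> 'rV[R]_n -> 'rV[R]_m -> 'rV[R]_d)
  (hf : jointly_convex f) (hg : jointly_affine g) (hh : jointly_affine h)
  (hfin : forall (δ : 'rV[R]_m) (θ : 'rV[R]_p),
      binvec δ -> Vdelta f g h K δ θ != -oo%E)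
  (Θ : set 'rV[R]_p) (hpoly : polytope Θ) (hfull : full_dimensional Θ)
  (hsub : Θ `<=` Theta_star g h K)
  (eps_a eps_r : R) (ha : 0 < eps_a) (hr : 0 <= eps_r)
  (θ : 'rV[R]_p) (hθ : interior Θ θ)
  (hV : {for θ, continuous (Vstar f g h K)})
  (δ : 'rV[R]_m) (hδ : Delta g h K Θ δ)
  (heq : Vdelta f g h K δ θ = Vstar f g h K θ)
  (hVd : {for θ, continuous (Vdelta f g h K δ)}) :
  exists γ : R, 0 < γ /\
    forall θ' : 'rV[R]_p, norm2 (θ' - θ) <= γ ->
      (Vdelta f g h K δ θ' - Vstar f g h K θ'
         <= maxe eps_a%:E (eps_r%:E * Vstar f g h K θ'))%E.
Proof.
set Vd := Vdelta f g h K δ in heq hVd *; set Vs := Vstar f g h K in heq hV *.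
have bδ : binvec δ := hδ.1.
have Vs_lt : (Vs θ < +oo)%E.
  have [δ' bδ' [x fx]] := hsub θ (interior_subset hθ).
  apply: (@le_lt_trans _ _ (f θ x δ')%:E); last by rewrite ltry.
  apply: (le_trans (ereal_inf_lbound _)); first by exists δ'.
  by apply: ereal_inf_lbound; exists x.
have vfin : Vd θ \is a fin_num.
  by rewrite fin_numE hfin //= heq lt_eqF.
set r := fine (Vd θ).
have hv : Vd θ = r%:E by rewrite fineK.
have c1 : Vd x @[x --> θ] --> r%:E by rewrite -hv; exact: hVd.
have c2 : Vs x @[x --> θ] --> r%:E by rewrite -hv heq; exact: hV.
move/fine_cvgP: c1 => [fin1 /cvgrPdist_lt c1].
move/fine_cvgP: c2 => [fin2 /cvgrPdist_lt c2].
have e0 : 0 < eps_a / 2 by rewrite divr_gt0.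
have Hn : \forall x \near θ, [/\ Vd x \is a fin_num, `|r - fine (Vd x)| < eps_a / 2,
    Vs x \is a fin_num & `|r - fine (Vs x)| < eps_a / 2].
  by near=> x; split; near: x => //; [exact: c1 | exact: c2].
move/nbhs_normP: Hn => [eps /= eps0 Hb].
exists (eps / 2); split; first by rewrite divr_gt0.
move=> θ' hθ'.
have [F1 N1 F2 N2] : [/\ Vd θ' \is a fin_num, `|r - fine (Vd θ')| < eps_a / 2,
    Vs θ' \is a fin_num & `|r - fine (Vs θ')| < eps_a / 2].
  apply: Hb => /=; rewrite -normrN opprB; apply: mxnorm_lt => //.
  apply: le_lt_trans hθ' _; rewrite ltr_pdivrMr // ltr_pMr //; lra.
rewrite -(fineK F1) -(fineK F2) le_max; apply/orP; left.
rewrite -EFinD lee_fin.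
move: N1 N2; rewrite !ltr_norml; lra.
Unshelve. all: end_near.
Qed.
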